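(* Let $X$ be a nonempty set, let $S$ be a semigroup, let $\phi':X\to E(S)$ be a one-to-one mapping, and let $T$ be a regular subsemigroup of $S$ containing $X\phi'$ such that $T$ has no proper regular subsemigroup containing $X\phi'$. Then there is a semigroup homomorphism $\psi:FT(X)\to S$ with $[x]\psi=x\phi'$ for all $x\in X$ and $(FT(X))\psi=T$.
   Context: Let $1$ be a symbol not in $X$. Elements of height $\ge 2$ are triples $g=(g^l,g^c,g^r)$. Set $\Gamma_0(X)=\{1\}$, $\Gamma_1(X)=X$, identify each $x\in X$ with $(1,x,1)$. For $i\ge 2$, $\Gamma_i(X)$ is the set of triples $g\in\Gamma_{i-1}(X)\times\Gamma_{i-2}(X)\times\Gamma_{i-1}(X)$ with $g^l\neq g^r$ and $g^c\in\{(g^l)^l,(g^l)^r\}\cap\{(g^r)^l,(g^r)^r\}$. $\Gamma(X)=\bigcup_{i\ge0}\Gamma_i(X)$. Let $\rho$ be the smallest congruence on $\Gamma(X)^+$ containing $(1g,g),(g1,g),(gg,g)$ for all $g\in\Gamma(X)$, and $(g^cg^lg,g)$, $(gg^rg^c,g)$, $(g^rg^cgg^cg^l,\,g^rg^cg^l)$ for all $g\in\Gamma_i(X)$, $i\ge2$. $FT^1(X)=\Gamma(X)^+/\rho$, $[u]$ the class of $u$, $FT(X)=FT^1(X)\setminus\{[1]\}$. $E(S)$ is the set of idempotents of $S$. *)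

(* Defs.v *)
From Stdlib Require Import List.
Import ListNotations.
Set Implicit Arguments.

(* Raw terms: the symbol 1, letters x in X (identified with (1,x,1)), triples. *)
Inductive gterm (X : Type) : Type :=
| gone : gterm X
| gatom : X -> gterm X
| gtrip : gterm X -> gterm X -> gterm X -> gterm X.
Arguments gone {X}.

Definition gl X (g : gterm X) : gterm X :=
  match g with gtrip l _ _ => l | _ => gone end.
Definition gc X (g : gterm X) : gterm X :=
  match g with gtrip _ c _ => c | gatom x => gatom x | gone => gone end.
Definition gr X (g : gterm X) : gterm X :=
  match g with gtrip _ _ r => r | _ => gone end.

Fixpoint inGam X (i : nat) (g : gterm X) : Prop :=
  match i with
  | 0 => g = gone
  | 1 => exists x, g = gatom x
  | S ((S j) as k) =>
      exists l c r, g = gtrip l c r /\ inGam k l /\ inGam j c /\ inGam k r /\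
        l <> r /\ (c = gl l \/ c = gr l) /\ (c = gl r \/ c = gr r)
  end.

Definition inGamma X (g : gterm X) : Prop := exists i, inGam i g.

Inductive rho_gen X : list (gterm X) -> list (gterm X) -> Prop :=
| rg_1l g : inGamma g -> rho_gen [gone; g] [g]
| rg_1r g : inGamma g -> rho_gen [g; gone] [g]
| rg_idem g : inGamma g -> rho_gen [g; g] [g]
| rg_cl i g : 2 <= i -> inGam i g -> rho_gen [gc g; gl g; g] [g]
| rg_rc i g : 2 <= i -> inGam i g -> rho_gen [g; gr g; gc g] [g]
| rg_five i g : 2 <= i -> inGam i g ->
    rho_gen [gr g; gc g; g; gc g; gl g] [gr g; gc g; gl g].

Inductive rho X : list (gterm X) -> list (gterm X) -> Prop :=
| rho_base u v : rho_gen u v -> rho u v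
| rho_refl u : rho u u
| rho_sym u v : rho u v -> rho v u
| rho_trans u v w : rho u v -> rho v w -> rho u w
| rho_ctx a b u v : rho u v -> rho (a ++ u ++ b) (a ++ v ++ b).

Definition gword X (u : list (gterm X)) : Prop :=
  u <> [] /\ Forall (@inGamma X) u.

(* representatives of elements of FT(X) = FT^1(X) \ {[1]} *)
Definition inFT X (u : list (gterm X)) : Prop :=
  gword u /\ ~ rho u [gone].

Definition idempotent S (op : S -> S -> S) (e : S) : Prop := op e e = e.
Definition subsemigroup S (op : S -> S -> S) (U : S -> Prop) : Prop :=
  forall a b, U a -> U b -> U (op a b).
Definition regular_subsemigroup S (op : S -> S -> S) (U : S -> Prop) : Prop :=
  subsemigroup op U /\ forall a, U a -> exists b, U b /\ op (op a b) a = a.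

(* A semigroup homomorphism psi : FT(X) -> S, presented by its values on
   representative words: constant on rho-classes and multiplicative. *)
Definition FT_hom X S (op : S -> S -> S) (psi : list (gterm X) -> S) : Prop :=
  (forall u v, inFT u -> inFT v -> rho u v -> psi u = psi v) /\
  (forall u v, inFT u -> inFT v -> psi (u ++ v) = op (psi u) (psi v)).

(* Main.v *)
Require Import Defs.
From Stdlib Require Import List ClassicalEpsilon Setoid Lia.
Import ListNotations.

Definition mul {S} (op : S -> S -> S) (a b : option S) : option S :=
  match a, b with
  | None, _ => b
  | Some x, None => Some x
  | Some x, Some y => Some (op x y)
  end.

Lemma mulA {S} (op : S -> S -> S) (opA : forall a b c, op a (op b c) = op (op a b) c) a b c :
  mul op a (mul op b c) = mul op (mul op a b) c.
Proof. destruct a, b, c; simpl; try reflexivity; rewrite opA; reflexivity. Qed.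

Lemma mul1l {S} (op : S -> S -> S) a : mul op None a = a.
Proof. reflexivity. Qed.
Lemma mul1r {S} (op : S -> S -> S) a : mul op a None = a.
Proof. destruct a; reflexivity. Qed.

Definition T1 {S} (T : S -> Prop) (o : option S) : Prop :=
  match o with None => True | Some s => T s end.

Lemma T1_mul {S} (op : S -> S -> S) T (HT : subsemigroup op T) a b :
  T1 T a -> T1 T b -> T1 T (mul op a b).
Proof. destruct a, b; simpl; auto. Qed.

Definition inv {S} (op : S -> S -> S) (T : S -> Prop) (z : option S) : option S :=
  epsilon (inhabits None) (fun y => T1 T y /\ mul op (mul op z y) z = z /\ mul op (mul op y z) y = y).

Lemma inv_spec {S} (op : S -> S -> S) (opA : forall a b c, op a (op b c) = op (op a b) c)
  T (HT : regular_subsemigroup op T) z : T1 T z ->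
  T1 T (inv op T z) /\ mul op (mul op z (inv op T z)) z = z /\
  mul op (mul op (inv op T z) z) (inv op T z) = inv op T z.
Proof.
  intro Hz. unfold inv. apply epsilon_spec.
  destruct z as [a|].
  - destruct HT as [HS HR]. destruct (HR a Hz) as [b [Hb Hab]].
    exists (Some (op (op b a) b)). simpl. split; [apply HS; [apply HS|]; auto|].
    split; f_equal.
    + rewrite !opA. rewrite Hab. exact Hab.
    + assert (E: forall t, op (op (op t a) b) a = op t a).
      { intro t. rewrite <- !opA. rewrite (opA a b a), Hab. reflexivity. }
      rewrite !opA. rewrite !E. reflexivity.
  - exists None. simpl. auto.
Qed.

Lemma word_alg (M : Type) (m : M -> M -> M) (mA : forall a b c, m a (m b c) = m (m a b) c)
  (C A B y : M)
  (CC : m C C = C) (ACA : m (m A C) A = A) (BCB : m (m B C) B = B)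
  (yzy : m (m y (m (m B C) (m C A))) y = y)
  (zyz : m (m (m (m B C) (m C A)) y) (m (m B C) (m C A)) = m (m B C) (m C A)) :
  let h := m (m (m C A) y) (m B C) in
  m h h = h /\ m (m h A) h = h /\ m (m h B) h = h /\
  m C h = h /\ m h C = h /\ m (m C A) h = h /\ m h (m B C) = h /\
  m (m (m B C) h) (m C A) = m (m B C) (m C A).
Proof.
  Ltac pref m mA H := let H' := fresh H "p" in assert (H' := fun t => f_equal (m t) H); simpl in H'; repeat setoid_rewrite mA in H'.
  repeat rewrite mA in yzy. repeat rewrite mA in zyz.
  assert (CCp : forall t, m (m t C) C = m t C) by (intro; rewrite <- mA, CC; auto).
  repeat rewrite CCp in yzy. repeat rewrite CCp in zyz.
  pref m mA ACA. pref m mA BCB. pref m mA yzy. pref m mA zyz.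
  Ltac simp CC CCp ACA ACAp BCB BCBp yzy yzyp zyz zyzp :=
    repeat (first [rewrite CC | rewrite CCp | rewrite ACA | rewrite ACAp | rewrite BCB | rewrite BCBp
      | rewrite yzy | rewrite yzyp | rewrite zyz | rewrite zyzp]).
  intro h; subst h.
  repeat split; rewrite !mA; simp CC CCp ACA ACAp BCB BCBp yzy yzyp zyz zyzp; reflexivity.
Qed.

Definition hf {S} (op : S -> S -> S) (T : S -> Prop) (C A B : option S) : option S :=
  mul op (mul op (mul op C A) (inv op T (mul op (mul op B C) (mul op C A)))) (mul op B C).

Lemma hf_spec {S} (op : S -> S -> S) (opA : forall a b c, op a (op b c) = op (op a b) c)
  T (HT : regular_subsemigroup op T) C A B :
  T1 T C -> T1 T A -> T1 T B ->
  mul op C C = C -> mul op (mul op A C) A = A -> mul op (mul op B C) B = B ->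
  let m := mul op in let h := hf op T C A B in
  T1 T h /\
  m h h = h /\ m (m h A) h = h /\ m (m h B) h = h /\
  m C h = h /\ m h C = h /\ m (m C A) h = h /\ m h (m B C) = h /\
  m (m (m B C) h) (m C A) = m (m B C) (m C A).
Proof.
  intros TC TA TB CC ACA BCB m h.
  assert (HS := proj1 HT).
  assert (Tz : T1 T (mul op (mul op B C) (mul op C A))) by (repeat apply T1_mul; auto).
  destruct (inv_spec op opA T HT _ Tz) as [Ty [zyz yzy]].
  split.
  - unfold h, hf. repeat apply T1_mul; auto.
  - apply (word_alg _ (mul op) (mulA op opA)); auto.
Qed.

Fixpoint ev {X S} (op : S -> S -> S) (phi : X -> S) (T : S -> Prop) (g : gterm X) : option S :=
  match g with
  | gone => None
  | gatom x => Some (phi x)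
  | gtrip l c r => hf op T (ev op phi T c) (ev op phi T l) (ev op phi T r)
  end.

Lemma mul_None {S} (op : S -> S -> S) a b : mul op a b = None -> a = None /\ b = None.
Proof. destruct a, b; simpl; intro H; try discriminate; auto. Qed.

Lemma trip_inv {X} (i : nat) (l c r : gterm X) : inGam i (gtrip l c r) ->
  exists j, i = S (S j) /\ inGam (S j) l /\ inGam j c /\ inGam (S j) r /\ l <> r /\
    (c = gl l \/ c = gr l) /\ (c = gl r \/ c = gr r).
Proof.
  destruct i as [|[|j]]; simpl.
  - discriminate.
  - intros [x Hx]; discriminate.
  - intros [l' [c' [r' [Heq H]]]]. injection Heq; intros; subst. exists j. tauto.
Qed.

Lemma gone_inv {X} i : inGam i (@gone X) -> i = 0.
Proof. destruct i as [|[|j]]; simpl; auto. intros [x Hx]; discriminate. intros [l [c [r [H _]]]]; discriminate. Qed.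

Lemma atom_inv {X} i (x : X) : inGam i (gatom x) -> i = 1.
Proof. destruct i as [|[|j]]; simpl; auto. discriminate. intros [l [c [r [H _]]]]; discriminate. Qed.



Definition Jg {X Y} (op : Y -> Y -> Y) phi T (g : gterm X) : Prop :=
  let E := ev op phi T in
  T1 T (E g) /\ mul op (E g) (E g) = E g /\
  mul op (mul op (E g) (E (gl g))) (E g) = E g /\
  mul op (mul op (E g) (E (gr g))) (E g) = E g.

Lemma J_all {X Y} (op : Y -> Y -> Y) (opA : forall a b c, op a (op b c) = op (op a b) c)
  (phi : X -> Y) (phi_idem : forall x, idempotent op (phi x))
  T (HT : regular_subsemigroup op T) (T_phi : forall x, T (phi x)) :
  forall g i, inGam i g -> Jg op phi T g.
Proof.
  induction g as [|x|l IHl c IHc r IHr]; intros i Hi.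
  - unfold Jg; simpl; auto.
  - unfold Jg; simpl. unfold idempotent in phi_idem. rewrite !phi_idem. auto.
  - destruct (trip_inv _ _ _ _ Hi) as [j [_ [Hl [Hc [Hr [_ [Hcl Hcr]]]]]]].
    destruct (IHl _ Hl) as [TA [AA [ALA ARA]]].
    destruct (IHc _ Hc) as [TC [CC _]].
    destruct (IHr _ Hr) as [TB [BB [BLB BRB]]].
    assert (ACA : mul op (mul op (ev op phi T l) (ev op phi T c)) (ev op phi T l) = ev op phi T l)
      by (destruct Hcl as [E|E]; rewrite E; auto).
    assert (BCB : mul op (mul op (ev op phi T r) (ev op phi T c)) (ev op phi T r) = ev op phi T r)
      by (destruct Hcr as [E|E]; rewrite E; auto).
    destruct (hf_spec op opA T HT _ _ _ TC TA TB CC ACA BCB) as [Th [hh [hAh [hBh _]]]].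
    unfold Jg; simpl. auto.
Qed.

Lemma ev_nonNone {X Y} (op : Y -> Y -> Y) (phi : X -> Y) T :
  forall g i, inGam (S i) g -> ev op phi T g <> None.
Proof.
  induction g as [|x|l IHl c IHc r IHr]; intros i Hi.
  - apply gone_inv in Hi. discriminate.
  - simpl. discriminate.
  - destruct (trip_inv _ _ _ _ Hi) as [j [_ [Hl _]]].
    simpl. unfold hf. intro H.
    apply mul_None in H as [H _]. apply mul_None in H as [H _].
    apply mul_None in H as [_ H]. exact (IHl _ Hl H).
Qed.

Definition P {X Y} (op : Y -> Y -> Y) phi T (u : list (gterm X)) : option Y :=
  fold_right (fun g acc => mul op (ev op phi T g) acc) None u.

Lemma P_app {X Y} (op : Y -> Y -> Y) (opA : forall a b c, op a (op b c) = op (op a b) c) phi T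
  (u v : list (gterm X)) : P op phi T (u ++ v) = mul op (P op phi T u) (P op phi T v).
Proof.
  induction u as [|g u IH]; simpl; auto. rewrite IH. apply mulA; auto.
Qed.

Lemma trip_of {X} i (g : gterm X) : 2 <= i -> inGam i g -> exists l c r, g = gtrip l c r.
Proof.
  intros Hi H. destruct g as [|x|l c r].
  - apply gone_inv in H; lia.
  - apply atom_inv in H; lia.
  - eauto.
Qed.

Lemma P_rho {X Y} (op : Y -> Y -> Y) (opA : forall a b c, op a (op b c) = op (op a b) c)
  (phi : X -> Y) (phi_idem : forall x, idempotent op (phi x))
  T (HT : regular_subsemigroup op T) (T_phi : forall x, T (phi x)) :
  forall u v, rho u v -> P op phi T u = P op phi T v.
Proof.
  assert (mA := mulA op opA).
  induction 1 as [u v Hg| | | |a b u v H IH].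
  - destruct Hg as [g Hg|g Hg|g [i Hg]|i g Hi Hg|i g Hi Hg|i g Hi Hg]; unfold P; simpl;
      rewrite ?mul1r; auto.
    1: destruct (J_all op opA phi phi_idem T HT T_phi g i Hg) as [_ [E _]]; exact E.
      all: destruct (trip_of _ _ Hi Hg) as [l [c [r E]]]; subst g.
      all: destruct (trip_inv _ _ _ _ Hg) as [j [_ [Hl [Hc [Hr [_ [Hcl Hcr]]]]]]].
      all: destruct (J_all op opA phi phi_idem T HT T_phi l _ Hl) as [TA [AA [ALA ARA]]].
      all: destruct (J_all op opA phi phi_idem T HT T_phi c _ Hc) as [TC [CC _]].
      all: destruct (J_all op opA phi phi_idem T HT T_phi r _ Hr) as [TB [BB [BLB BRB]]].
      all: assert (ACA : mul op (mul op (ev op phi T l) (ev op phi T c)) (ev op phi T l) = ev op phi T l)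
        by (destruct Hcl as [E|E]; rewrite E; auto).
      all: assert (BCB : mul op (mul op (ev op phi T r) (ev op phi T c)) (ev op phi T r) = ev op phi T r)
        by (destruct Hcr as [E|E]; rewrite E; auto).
      all: destruct (hf_spec op opA T HT _ _ _ TC TA TB CC ACA BCB) as [Th [hh [hAh [hBh [Ch [hC [ph [hq five]]]]]]]].
      all: simpl gc; simpl gl; simpl gr; simpl ev.
      * rewrite mA; exact ph.
      * exact hq.
      * rewrite !mA in five. rewrite <- (mA (ev op phi T r) (ev op phi T c) (ev op phi T c)), CC in five.
        rewrite !mA. exact five.
  - reflexivity.
  - auto.
  - congruence.
  - rewrite !(P_app op opA), IH. reflexivity.
Qed.

Definition good {X Y} (op : Y -> Y -> Y) (phi : X -> Y) (T : Y -> Prop) : Prop :=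
  (forall a b c, op a (op b c) = op (op a b) c) /\ (forall x, idempotent op (phi x)) /\
  regular_subsemigroup op T /\ (forall x, T (phi x)).

Lemma J_good {X Y} (op : Y -> Y -> Y) (phi : X -> Y) T (G : good op phi T) g i :
  inGam i g -> Jg op phi T g.
Proof. destruct G as [? [? [? ?]]]. apply J_all; auto. Qed.

Lemma mA_good {X Y} (op : Y -> Y -> Y) (phi : X -> Y) T (G : good op phi T) :
  forall a b c, mul op a (mul op b c) = mul op (mul op a b) c.
Proof. destruct G as [? _]. apply mulA; auto. Qed.

Definition adj {X} (u v : gterm X) : Prop := inGamma u /\ u <> gone /\ (v = gl u \/ v = gr u).

Fixpoint desc {X} (l : list (gterm X)) : Prop :=
  match l with
  | a :: ((b :: _) as t) => adj a b /\ desc t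
  | _ => True
  end.

Fixpoint lev {X} (g : gterm X) : nat :=
  match g with gone => 0 | gatom _ => 1 | gtrip l _ _ => S (lev l) end.

Lemma inGam_lev {X} (g : gterm X) : forall i, inGam i g -> i = lev g.
Proof.
  induction g as [|x|l IHl c _ r _]; intros i H.
  - apply gone_inv in H; auto.
  - apply atom_inv in H; auto.
  - destruct (trip_inv _ _ _ _ H) as [j [E [Hl _]]]. apply IHl in Hl. simpl. lia.
Qed.

Lemma comp_inGam {X} (u v : gterm X) i : inGam i u -> u <> gone -> (v = gl u \/ v = gr u) ->
  exists i', i = S i' /\ inGam i' v.
Proof.
  intros H Hne Hv. destruct u as [|x|l c r].
  - congruence.
  - apply atom_inv in H. subst. exists 0. split; auto. simpl in Hv. destruct Hv; subst; reflexivity.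
  - destruct (trip_inv _ _ _ _ H) as [j [E [Hl [_ [Hr _]]]]]. exists (S j). split; auto.
    simpl in Hv. destruct Hv; subst; auto.
Qed.

Lemma adj_Gamma {X} (u v : gterm X) : adj u v -> inGamma u /\ inGamma v.
Proof.
  intros [[i Hi] [Hne Hv]]. split. exists i; auto.
  destruct (comp_inGam _ _ _ Hi Hne Hv) as [i' [_ H]]. exists i'; auto.
Qed.

Lemma F1 {X Y} (op : Y -> Y -> Y) (phi : X -> Y) T (G : good op phi T) g :
  inGamma g -> mul op (ev op phi T g) (ev op phi T g) = ev op phi T g.
Proof. intros [i H]. destruct (J_good op phi T G g i H) as [_ [E _]]. exact E. Qed.

Lemma F2 {X Y} (op : Y -> Y -> Y) (phi : X -> Y) T (G : good op phi T) u v :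
  adj u v -> mul op (mul op (ev op phi T u) (ev op phi T v)) (ev op phi T u) = ev op phi T u.
Proof.
  intros [[i H] [_ Hv]]. destruct (J_good op phi T G u i H) as [_ [_ [E1 E2]]].
  destruct Hv; subst; auto.
Qed.

Lemma F3 {X Y} (op : Y -> Y -> Y) (phi : X -> Y) T (G : good op phi T) (p q g : gterm X) :
  adj p q -> adj g q -> p <> g -> exists k, adj k p /\ adj k g /\
  mul op (mul op (ev op phi T p) (ev op phi T q)) (ev op phi T g) =
  mul op (mul op (ev op phi T p) (ev op phi T k)) (ev op phi T g).
Proof.
  intros [[i Hp] [Hpn Hpq]] [[j Hg] [Hgn Hgq]] Hne.
  destruct (comp_inGam _ _ _ Hp Hpn Hpq) as [i' [Ei Hq]].
  destruct (comp_inGam _ _ _ Hg Hgn Hgq) as [j' [Ej Hq']].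
  assert (i' = j') by (apply inGam_lev in Hq; apply inGam_lev in Hq'; lia). subst i' j i.
  assert (Hk : inGam (S (S j')) (gtrip g q p)).
  { simpl. exists g, q, p. repeat split; auto. }
  exists (gtrip g q p). split; [|split].
  - split; [exists (S (S j')); auto|]. split; [discriminate|]. right; reflexivity.
  - split; [exists (S (S j')); auto|]. split; [discriminate|]. left; reflexivity.
  - destruct G as [opA [phi_idem [HT T_phi]]].
    assert (mA := mulA op opA).
    destruct (J_all op opA phi phi_idem T HT T_phi p _ Hp) as [TB [BB [BLB BRB]]].
    destruct (J_all op opA phi phi_idem T HT T_phi q _ Hq) as [TC [CC _]].
    destruct (J_all op opA phi phi_idem T HT T_phi g _ Hg) as [TA [AA [ALA ARA]]].
    assert (ACA : mul op (mul op (ev op phi T g) (ev op phi T q)) (ev op phi T g) = ev op phi T g)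
        by (destruct Hgq as [E|E]; rewrite E; auto).
    assert (BCB : mul op (mul op (ev op phi T p) (ev op phi T q)) (ev op phi T p) = ev op phi T p)
        by (destruct Hpq as [E|E]; rewrite E; auto).
    destruct (hf_spec op opA T HT _ _ _ TC TA TB CC ACA BCB) as [Th [hh [hAh [hBh [Ch [hC [ph [hq five]]]]]]]].
    simpl ev.
    set (h := hf op T (ev op phi T q) (ev op phi T g) (ev op phi T p)) in *.
    assert (Chp : forall t, mul op (mul op t (ev op phi T q)) h = mul op t h)
      by (intro t; rewrite <- mA, Ch; auto).
    assert (hCp : forall t, mul op (mul op t h) (ev op phi T q) = mul op t h)
      by (intro t; rewrite <- mA, hC; auto).
    assert (CCp : forall t, mul op (mul op t (ev op phi T q)) (ev op phi T q) = mul op t (ev op phi T q))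
      by (intro t; rewrite <- mA, CC; auto).
    rewrite !mA in five. rewrite Chp, hCp, CCp in five. symmetry. exact five.
Qed.

Lemma chains {X Y} (op : Y -> Y -> Y) (phi : X -> Y) T (G : good op phi T) :
  forall (g : gterm X) i, inGam i g ->
  (exists D, desc (g :: D) /\ last (g :: D) gone = gone /\ P op phi T (g :: D) = ev op phi T g) /\
  (exists D, desc (g :: D) /\ last (g :: D) gone = gone /\ P op phi T (rev (g :: D)) = ev op phi T g).
Proof.
  assert (mA := mA_good op phi T G).
  induction g as [|x|l IHl c IHc r IHr]; intros i Hi.
  - split; exists []; simpl; auto.
  - assert (Hx : adj (gatom x) gone).
    { split; [exists 1; simpl; eauto|]. split; [discriminate|]. left; reflexivity. }
    split; exists [gone]; simpl; auto.
  - destruct (trip_inv _ _ _ _ Hi) as [j [Ei [Hl [Hc [Hr [_ [Hcl Hcr]]]]]]].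
    subst i.
    destruct G as [opA [phi_idem [HT T_phi]]].
    destruct (J_all op opA phi phi_idem T HT T_phi l _ Hl) as [TA [AA [ALA ARA]]].
    destruct (J_all op opA phi phi_idem T HT T_phi c _ Hc) as [TC [CC _]].
    destruct (J_all op opA phi phi_idem T HT T_phi r _ Hr) as [TB [BB [BLB BRB]]].
    assert (ACA : mul op (mul op (ev op phi T l) (ev op phi T c)) (ev op phi T l) = ev op phi T l)
        by (destruct Hcl as [E|E]; rewrite E; auto).
    assert (BCB : mul op (mul op (ev op phi T r) (ev op phi T c)) (ev op phi T r) = ev op phi T r)
        by (destruct Hcr as [E|E]; rewrite E; auto).
    destruct (hf_spec op opA T HT _ _ _ TC TA TB CC ACA BCB) as [Th [hh [hAh [hBh [Ch [hC [ph [hq five]]]]]]]].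
    destruct (IHc _ Hc) as [[D1 [Hd1 [Hl1 HP1]]] [D2 [Hd2 [Hl2 HP2]]]].
    assert (Hg : inGamma (gtrip l c r)) by (exists (S (S j)); auto).
    assert (rne : r <> gone) by (intro; subst; apply gone_inv in Hr; discriminate).
    assert (lne : l <> gone) by (intro; subst; apply gone_inv in Hl; discriminate).
    split.
    + exists (r :: c :: D1). split; [|split].
      * simpl. split; [split; [auto|split; [discriminate|right; reflexivity]]|].
        split; [split; [exists (S j); auto|split; auto]|]. exact Hd1.
      * exact Hl1.
      * change (P op phi T (gtrip l c r :: r :: c :: D1)) with
          (mul op (ev op phi T (gtrip l c r)) (mul op (ev op phi T r) (P op phi T (c :: D1)))).
        rewrite HP1. simpl ev. exact hq.
    + exists (l :: c :: D2). split; [|split].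
      * simpl. split; [split; [auto|split; [discriminate|left; reflexivity]]|].
        split; [split; [exists (S j); auto|split; auto]|]. exact Hd2.
      * exact Hl2.
      * change (rev (gtrip l c r :: l :: c :: D2)) with ((rev (c :: D2) ++ [l]) ++ [gtrip l c r]).
        rewrite !(P_app op opA), HP2. unfold P. simpl fold_right. rewrite !mul1r.
        simpl ev. exact ph.
Qed.

Definition mountain {X} (m : list (gterm X)) : Prop :=
  exists A p B, m = rev A ++ p :: B /\ inGamma p /\ desc (p :: A) /\ desc (p :: B).

Lemma desc_Forall {X} (B : list (gterm X)) : forall p, inGamma p -> desc (p :: B) -> Forall (@inGamma X) (p :: B).
Proof.
  induction B as [|q B IH]; intros p Hp Hd.
  - constructor; auto.
  - destruct Hd as [Ha Hd]. constructor; auto. apply IH; auto. apply (adj_Gamma _ _ Ha).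
Qed.

Lemma mountain_Forall {X} (m : list (gterm X)) : mountain m -> Forall (@inGamma X) m.
Proof.
  intros [A [p [B [E [Hp [HA HB]]]]]]. subst.
  apply Forall_app. split.
  - apply desc_Forall in HA; auto. inversion HA. apply Forall_rev; auto.
  - apply desc_Forall; auto.
Qed.

Lemma mountain_ne {X} (m : list (gterm X)) : mountain m -> m <> [].
Proof. intros [A [p [B [E _]]]] H. subst. destruct (rev A); discriminate. Qed.

Lemma last_app2 {X} (l D : list X) d : l <> [] -> last (l ++ D) d = last (last l d :: D) d.
Proof.
  induction l as [|a l IH]; intro H; [congruence|].
  destruct l as [|b l].
  - reflexivity.
  - transitivity (last ((b :: l) ++ D) d); [reflexivity|].
    rewrite IH by discriminate. reflexivity.
Qed.

Lemma last_idem {X Y} (op : Y -> Y -> Y) (phi : X -> Y) T (G : good op phi T) (l : list (gterm X)) :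
  Forall (@inGamma X) l -> l <> [] ->
  mul op (P op phi T l) (ev op phi T (last l gone)) = P op phi T l.
Proof.
  intros HF Hne.
  assert (Hin : inGamma (last l gone)).
  { rewrite (app_removelast_last gone Hne) in HF. apply Forall_app in HF as [_ HF].
    inversion HF; auto. }
  rewrite (app_removelast_last gone Hne) at 1 3.
  rewrite (P_app op (proj1 G)). unfold P at 2. simpl. rewrite mul1r.
  rewrite <- (mA_good op phi T G), (F1 op phi T G _ Hin). reflexivity.
Qed.

Lemma descK {X Y} (op : Y -> Y -> Y) (phi : X -> Y) T (G : good op phi T) (B : list (gterm X)) :
  forall p, inGamma p -> desc (p :: B) ->
  mul op (mul op (ev op phi T p) (P op phi T B)) (mul op (P op phi T (rev B)) (ev op phi T p)) = ev op phi T p.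
Proof.
  assert (mA := mA_good op phi T G).
  induction B as [|q B IH]; intros p Hp Hd.
  - simpl. rewrite mul1r. apply (F1 op phi T G _ Hp).
  - destruct Hd as [Ha Hd]. specialize (IH q (proj2 (adj_Gamma _ _ Ha)) Hd).
    simpl rev. rewrite (P_app op (proj1 G)). 
    change (P op phi T (q :: B)) with (mul op (ev op phi T q) (P op phi T B)).
    unfold P at 3. simpl fold_right. rewrite mul1r.
    transitivity (mul op (mul op (ev op phi T p) (mul op (mul op (ev op phi T q) (P op phi T B))
       (mul op (P op phi T (rev B)) (ev op phi T q)))) (ev op phi T p)).
    + rewrite !mA. reflexivity.
    + rewrite IH. apply (F2 op phi T G _ _ Ha).
Qed.


Lemma mountain_reg {X Y} (op : Y -> Y -> Y) (phi : X -> Y) T (G : good op phi T) (m : list (gterm X)) :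
  mountain m ->
  mul op (mul op (P op phi T m) (P op phi T (rev m))) (P op phi T m) = P op phi T m.
Proof.
  assert (mA := mA_good op phi T G).
  intros [A [p [B [E [Hp [HA HB]]]]]]. subst m.
  assert (KA := descK op phi T G A p Hp HA).
  assert (KB := descK op phi T G B p Hp HB).
  rewrite rev_app_distr, rev_involutive.
  simpl rev. rewrite !(P_app op (proj1 G)).
  change (P op phi T (p :: B)) with (mul op (ev op phi T p) (P op phi T B)).
  change (P op phi T (p :: A)) with (mul op (ev op phi T p) (P op phi T A)).
  unfold P at 4. simpl fold_right. rewrite mul1r.
  repeat rewrite mA in KA. repeat rewrite mA in KB.
  pref (mul op) mA KA. pref (mul op) mA KB.
  repeat rewrite mA. rewrite KBp. rewrite KAp. reflexivity.
Qed.

Lemma P_single {X Y} (op : Y -> Y -> Y) (phi : X -> Y) T g : P op phi T [g] = ev op phi T g.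
Proof. unfold P; simpl; apply mul1r. Qed.

Lemma fix_step {X Y} (op : Y -> Y -> Y) (phi : X -> Y) T (G : good op phi T) (B : list (gterm X)) :
  forall p, inGamma p -> desc (p :: B) -> forall v, adj v (last (p :: B) gone) ->
  exists B', P op phi T (p :: B') = mul op (P op phi T (p :: B)) (ev op phi T v) /\
    last (p :: B') gone = v /\
    (desc (p :: B') \/ exists g B'', B' = g :: B'' /\ adj g p /\ desc (g :: B'')).
Proof.
  assert (mA := mA_good op phi T G).
  induction B as [|q B0 IH]; intros p Hp Hd v Hv.
  - exists [v]. split; [|split].
    + simpl. rewrite !mul1r. reflexivity.
    + reflexivity.
    + right. exists v, []. simpl. auto.
  - destruct Hd as [Hpq Hd].
    assert (Hq : inGamma q) by apply (proj2 (adj_Gamma _ _ Hpq)).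
    destruct (IH q Hq Hd v Hv) as [B1 [HP [Hl [Hd1 | [g [B2 [E1 [Hgq Hd2]]]]]]]].
    + exists (q :: B1). split; [|split].
      * change (P op phi T (p :: q :: B1)) with (mul op (ev op phi T p) (P op phi T (q :: B1))).
        rewrite HP. change (P op phi T (p :: q :: B0)) with (mul op (ev op phi T p) (P op phi T (q :: B0))).
        apply mA.
      * exact Hl.
      * left. split; auto.
    + subst B1.
      assert (Hrhs : mul op (P op phi T (p :: q :: B0)) (ev op phi T v) =
                     mul op (ev op phi T p) (mul op (ev op phi T q) (mul op (ev op phi T g) (P op phi T B2)))).
      { change (P op phi T (p :: q :: B0)) with (mul op (ev op phi T p) (P op phi T (q :: B0))).
        rewrite <- mA, <- HP. reflexivity. }
      destruct (classic (g = p)) as [Egp | Ngp].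
      * subst g. exists B2. split; [|split].
        -- rewrite Hrhs. change (P op phi T (p :: B2)) with (mul op (ev op phi T p) (P op phi T B2)).
           rewrite !mA. rewrite (F2 op phi T G _ _ Hpq). reflexivity.
        -- exact Hl.
        -- left. exact Hd2.
      * destruct (F3 op phi T G p q g Hpq Hgq (fun E => Ngp (eq_sym E))) as [k [Hkp [Hkg Hk]]].
        exists (k :: g :: B2). split; [|split].
        -- rewrite Hrhs. change (P op phi T (p :: k :: g :: B2)) with
             (mul op (ev op phi T p) (mul op (ev op phi T k) (mul op (ev op phi T g) (P op phi T B2)))).
           rewrite !mA. rewrite Hk. reflexivity.
        -- exact Hl.
        -- right. exists k, (g :: B2). split; auto. split; auto. split; auto.
Qed.

Lemma last_app3 {X} (l D : list X) a d : last (l ++ a :: D) d = last (a :: D) d.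
Proof.
  induction l as [|b l IH]; [reflexivity|].
  destruct l as [|c l]; [reflexivity|]. exact IH.
Qed.

Lemma mountain_step {X Y} (op : Y -> Y -> Y) (phi : X -> Y) T (G : good op phi T) (m : list (gterm X)) v :
  mountain m -> adj v (last m gone) ->
  exists m', mountain m' /\ P op phi T m' = mul op (P op phi T m) (ev op phi T v) /\ last m' gone = v.
Proof.
  assert (mA := mA_good op phi T G).
  intros [A [p [B [E [Hp [HA HB]]]]]] Hv. subst m.
  rewrite last_app3 in Hv.
  destruct (fix_step op phi T G B p Hp HB v Hv) as [B' [HP [Hl Hd]]].
  exists (rev A ++ p :: B'). split; [|split].
  - destruct Hd as [Hd | [g [B'' [E1 [Hgp Hd]]]]].
    + exists A, p, B'. auto.
    + exists (p :: A), g, B''. split.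
      * subst B'. simpl. rewrite <- app_assoc. reflexivity.
      * split; [apply (proj1 (adj_Gamma _ _ Hgp))|]. split; auto. simpl. split; auto.
  - rewrite !(P_app op (proj1 G)), HP. apply mA.
  - rewrite last_app3. exact Hl.
Qed.

Lemma append_asc {X Y} (op : Y -> Y -> Y) (phi : X -> Y) T (G : good op phi T) (D : list (gterm X)) :
  forall g, desc (g :: D) -> inGamma g -> forall m, mountain m -> last m gone = last (g :: D) gone ->
  exists m', mountain m' /\ last m' gone = g /\
    P op phi T m' = mul op (P op phi T m) (P op phi T (rev (g :: D))).
Proof.
  assert (mA := mA_good op phi T G).
  induction D as [|d D IH]; intros g Hd Hg m Hm Hl.
  - exists m. split; auto. split; auto. simpl. rewrite mul1r.
    simpl in Hl. rewrite <- Hl. symmetry. apply (last_idem op phi T G).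
    apply mountain_Forall; auto. apply mountain_ne; auto.
  - destruct Hd as [Hgd Hd].
    destruct (IH d Hd (proj2 (adj_Gamma _ _ Hgd)) m Hm Hl) as [m1 [Hm1 [Hl1 HP1]]].
    rewrite <- Hl1 in Hgd.
    destruct (mountain_step op phi T G m1 g Hm1 Hgd) as [m' [Hm' [HP' Hl']]].
    exists m'. split; auto. split; auto.
    rewrite HP', HP1.
    change (rev (g :: d :: D)) with (rev (d :: D) ++ [g]).
    rewrite (P_app op (proj1 G)), P_single.
    rewrite mA. reflexivity.
Qed.

Lemma desc_app {X} (B D : list (gterm X)) : forall p, desc (p :: B) -> desc (last (p :: B) gone :: D) ->
  desc (p :: B ++ D).
Proof.
  induction B as [|q B IH]; intros p H1 H2; [exact H2|].
  destruct H1 as [Ha H1]. simpl. split; auto. apply IH; auto.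
Qed.

Lemma append_desc {X} (m D : list (gterm X)) :
  mountain m -> desc (last m gone :: D) -> mountain (m ++ D) /\ last (m ++ D) gone = last (last m gone :: D) gone.
Proof.
  intros Hm Hd. split.
  - destruct Hm as [A [p [B [E [Hp [HA HB]]]]]]. subst m.
    rewrite last_app3 in Hd.
    exists A, p, (B ++ D). split; [rewrite <- app_assoc; reflexivity|].
    split; auto. split; auto. apply desc_app; auto.
  - apply last_app2. apply mountain_ne; auto.
Qed.

Lemma loop {X Y} (op : Y -> Y -> Y) (phi : X -> Y) T (G : good op phi T) (m : list (gterm X)) g :
  mountain m -> last m gone = gone -> inGamma g ->
  exists m', mountain m' /\ last m' gone = gone /\ P op phi T m' = mul op (P op phi T m) (ev op phi T g).
Proof.
  assert (mA := mA_good op phi T G).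
  intros Hm Hl [i Hg].
  destruct (chains op phi T G g i Hg) as [[Dd [Hdd [Hld HPd]]] [Da [Hda [Hla HPa]]]].
  destruct (append_asc op phi T G Da g Hda (ex_intro _ i Hg) m Hm (eq_trans Hl (eq_sym Hla)))
    as [m1 [Hm1 [Hl1 HP1]]].
  rewrite HPa in HP1.
  assert (Hd' : desc (last m1 gone :: Dd)) by (rewrite Hl1; exact Hdd).
  destruct (append_desc m1 Dd Hm1 Hd') as [Hm' Hl'].
  exists (m1 ++ Dd). split; auto. split.
  - rewrite Hl', Hl1. exact Hld.
  - rewrite (P_app op (proj1 G)).
    rewrite <- (last_idem op phi T G m1 (mountain_Forall _ Hm1) (mountain_ne _ Hm1)), Hl1.
    rewrite <- mA. change (mul op (ev op phi T g) (P op phi T Dd)) with (P op phi T (g :: Dd)).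
    rewrite HPd. rewrite <- HP1. rewrite <- Hl1.
    apply (last_idem op phi T G m1 (mountain_Forall _ Hm1) (mountain_ne _ Hm1)).
Qed.

Lemma word_mountain {X Y} (op : Y -> Y -> Y) (phi : X -> Y) T (G : good op phi T) (u : list (gterm X)) :
  Forall (@inGamma X) u -> forall m0, mountain m0 -> last m0 gone = gone ->
  exists m, mountain m /\ P op phi T m = mul op (P op phi T m0) (P op phi T u).
Proof.
  assert (mA := mA_good op phi T G).
  induction 1 as [|g u Hg Hu IH]; intros m0 Hm0 Hl0.
  - exists m0. split; auto. simpl. rewrite mul1r. reflexivity.
  - destruct (loop op phi T G m0 g Hm0 Hl0 Hg) as [m1 [Hm1 [Hl1 HP1]]].
    destruct (IH m1 Hm1 Hl1) as [m [Hm HP]].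
    exists m. split; auto. rewrite HP, HP1. simpl. rewrite mA. reflexivity.
Qed.

Lemma P_None_Forall {X Y} (op : Y -> Y -> Y) (phi : X -> Y) T (l : list (gterm X)) :
  P op phi T l = None <-> Forall (fun g => ev op phi T g = None) l.
Proof.
  induction l as [|g l IH]; simpl.
  - split; auto.
  - split.
    + intro H. apply mul_None in H as [H1 H2]. constructor; auto. apply IH; auto.
    + intro H. inversion H; subst. rewrite H2. simpl. apply IH; auto.
Qed.

Lemma all_gone_rho {X} (u : list (gterm X)) : u <> [] -> Forall (fun g => g = gone) u -> rho u [gone].
Proof.
  induction u as [|g u IH]; intros Hne HF; [congruence|].
  inversion HF; subst.
  destruct u as [|g' u].
  - apply rho_refl.
  - assert (H := IH ltac:(discriminate) H2).
    pose proof (rho_ctx [gone] [] H) as H'. simpl in H'. rewrite !app_nil_r in H'.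
    eapply rho_trans; [exact H'|].
    apply rho_base. apply rg_idem. exists 0. reflexivity.
Qed.

Lemma None_rho {X Y} (op : Y -> Y -> Y) (phi : X -> Y) T (u : list (gterm X)) :
  gword u -> P op phi T u = None -> rho u [gone].
Proof.
  intros [Hne HG] HP. apply all_gone_rho; auto.
  apply P_None_Forall in HP.
  rewrite Forall_forall in *. intros g Hg. specialize (HP g Hg). destruct (HG g Hg) as [i Hi].
  destruct i as [|i]. exact Hi. exfalso. exact (ev_nonNone op phi T g i Hi HP).
Qed.

Lemma P_T1 {X Y} (op : Y -> Y -> Y) (phi : X -> Y) T (G : good op phi T) (u : list (gterm X)) :
  Forall (@inGamma X) u -> T1 T (P op phi T u).
Proof.
  induction 1 as [|g u [i Hg] Hu IH]; simpl; auto.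
  apply T1_mul. apply (proj1 (proj1 (proj2 (proj2 G)))).
  apply (J_good op phi T G g i Hg). auto.
Qed.

Theorem corollary5p4 (X : Type) (x0 : X) (S : Type) (op : S -> S -> S)
  (opA : forall a b c, op a (op b c) = op (op a b) c)
  (phi : X -> S)
  (phi_inj : forall x y, phi x = phi y -> x = y)
  (phi_idem : forall x, idempotent op (phi x))
  (T : S -> Prop)
  (T_reg : regular_subsemigroup op T)
  (T_phi : forall x, T (phi x))
  (T_min : forall U : S -> Prop, regular_subsemigroup op U ->
             (forall x, U (phi x)) -> (forall s, U s -> T s) ->
             forall s, T s -> U s) :
  exists psi : list (gterm X) -> S,
    FT_hom op psi /\
    (forall x, psi [gatom x] = phi x) /\
    (forall s, T s <-> exists u, inFT u /\ psi u = s).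
Proof.
  assert (G : good op phi T) by (split; auto).
  assert (Prho : forall u v, rho u v -> P op phi T u = P op phi T v)
    by (apply P_rho; auto).
  set (psi := fun u => match P op phi T u with Some s => s | None => phi x0 end).
  assert (Hsome : forall u, inFT u -> P op phi T u = Some (psi u)).
  { intros u [Hw Hn]. unfold psi. destruct (P op phi T u) eqn:E; auto.
    exfalso. apply Hn. apply (None_rho op phi T); auto. }
  assert (inFT_app : forall u v, inFT u -> inFT v -> inFT (u ++ v) /\ psi (u ++ v) = op (psi u) (psi v)).
  { intros u v Hu Hv.
    assert (E : P op phi T (u ++ v) = Some (op (psi u) (psi v))).
    { rewrite (P_app op opA), (Hsome u Hu), (Hsome v Hv). reflexivity. }
    split.
    - destruct Hu as [[Hu1 Hu2] _]. destruct Hv as [[Hv1 Hv2] _].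
      split; [split|].
      + destruct u; [congruence|discriminate].
      + apply Forall_app; auto.
      + intro H. apply Prho in H. rewrite E in H. discriminate.
    - unfold psi at 1. rewrite E. reflexivity. }
  assert (inT : forall u, inFT u -> T (psi u)).
  { intros u Hu. assert (H := P_T1 op phi T G u (proj2 (proj1 Hu))). rewrite (Hsome u Hu) in H. exact H. }
  assert (atomFT : forall x : X, inFT [gatom x]).
  { intro x. split; [split|].
    - discriminate.
    - constructor; auto. exists 1. simpl. eauto.
    - intro H. apply Prho in H. discriminate. }
  exists psi. split; [split|split].
  - intros u v Hu Hv H. unfold psi. rewrite (Prho u v H). reflexivity.
  - intros u v Hu Hv. apply inFT_app; auto.
  - intro x. reflexivity.
  - intro s. split.
    + intro Hs. apply (T_min (fun s => exists u, inFT u /\ psi u = s)); [ | | | exact Hs].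
      * split.
        -- intros a b [u [Hu Ea]] [v [Hv Eb]]. subst. exists (u ++ v). apply inFT_app; auto.
        -- intros a [u [Hu Ea]]. subst a.
           assert (Hm0 : mountain [@gone X]).
           { exists [], gone, []. split; auto. split; [exists 0; reflexivity|]. simpl; auto. }
           destruct (word_mountain op phi T G u (proj2 (proj1 Hu)) [gone] Hm0 eq_refl) as [m [Hm HPm]].
           simpl in HPm. rewrite (Hsome u Hu) in HPm.
           assert (Hrev : inFT (rev m)).
           { split; [split|].
             - intro H. apply (mountain_ne m Hm). rewrite <- (rev_involutive m), H. reflexivity.
             - apply Forall_rev. apply mountain_Forall; auto.
             - intro H. apply Prho in H. simpl in H.
               apply P_None_Forall in H. apply Forall_rev in H. rewrite rev_involutive in H.
               apply P_None_Forall in H. rewrite HPm in H. discriminate. }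
           exists (psi (rev m)). split; [exists (rev m); auto|].
           assert (R := mountain_reg op phi T G m Hm).
           rewrite HPm, (Hsome _ Hrev) in R. simpl in R. injection R. auto.
      * intro x. exists [gatom x]. split; auto.
      * intros s' [u [Hu E]]. subst. auto.
    + intros [u [Hu E]]. subst. auto.
Qed.
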